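(* Let $\bar f=(f_1,\dots,f_n)$, $\bar b=(b_1,\dots,b_m)$ be frame sequences with a distance $d$ satisfying the triangle inequality, such that $d(f_i,f_{i+1})\le\delta$ for $1\le i<n$, $d(b_j,b_{j+1})\le\delta$ for $1\le j<m$, and for every $i$ there is $j$ with $d(f_i,b_j)\le\epsilon$. Suppose $k=\epsilon/\delta$ is an integer with $1\le k\le\min\{n,m\}$. Then Algorithm Near-Linear($k$) returns a matching $\pi$ with cost $C(\pi)=O(\epsilon)$, and runs $k^2$ times faster than the naive $\Theta(mn)$ algorithm, i.e. in time $O(\frac{nm}{k^2})=O(\frac{nm\delta^2}{\epsilon^2})$.
   Context: For $\pi:\{1,\dots,n\}\to\{1,\dots,m\}$, $C(\pi)=\frac1n\sum_{i=1}^n d(f_i,b_{\pi(i)})$. The naive algorithm computes $d(f_i,b_j)$ for all pairs and picks, for each $i$, the minimizing $j$. Algorithm Near-Linear($k$): let $S_i^k=\{i:1\le i\le n,\ i\equiv 0 \bmod k\}\cup\{1\}\cup\{n\}$ and $S_j^k=\{j:1\le j\le m,\ j\equiv0\bmod k\}\cup\{1\}\cup\{m\}$; for $i\in S_i^k$ set $\pi(i)=\arg\min_{j\in S_j^k} d(f_i,b_j)$; for $i\notin S_i^k$ let $near(i)=\arg\min_{t\in S_i^k}|t-i|$ and set $\pi(i)=\pi(near(i))$. Running time counts each evaluation of $d$ as one step. *)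

(* Defs.v *)
From mathcomp Require Import all_boot all_order all_algebra.
Set Implicit Arguments. Unset Strict Implicit. Unset Printing Implicit Defensive.
Import Order.TTheory GRing.Theory Num.Theory.
Local Open Scope ring_scope.

(* Indices are 1-based natural numbers: frames f 1 .. f n, b 1 .. b m. *)

Definition inS (N k i : nat) : bool :=
  ((1 <= i) && (i <= N))%N && [|| (k %| i)%N, i == 1%N | i == N].

Definition cardS (N k : nat) : nat := count (inS N k) (iota 1 N).

Definition distn (a b : nat) : nat := ((a - b) + (b - a))%N.

Definition is_distance (R : realFieldType) (T : Type) (d : T -> T -> R) : Prop :=
  (forall x y, 0 <= d x y) /\ (forall x y, d x y = d y x) /\
  (forall x y z, d x z <= d x y + d y z).

(* pi is a possible output of Algorithm Near-Linear(k) (arbitrary tie-breaking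
   in both argmins). *)
Definition near_linear_output (R : realFieldType) (T : Type) (d : T -> T -> R)
    (n m k : nat) (f b : nat -> T) (pi : nat -> nat) : Prop :=
  (forall i, inS n k i ->
     inS m k (pi i) /\ (forall j, inS m k j -> d (f i) (b (pi i)) <= d (f i) (b j)))
  /\
  (forall i, (1 <= i <= n)%N -> ~~ inS n k i ->
     exists t, [/\ inS n k t,
                   (forall t', inS n k t' -> (distn t i <= distn t' i)%N)
                 & pi i = pi t]).

Definition cost (R : realFieldType) (T : Type) (d : T -> T -> R)
    (n : nat) (f b : nat -> T) (pi : nat -> nat) : R :=
  (\sum_(1 <= i < n.+1) d (f i) (b (pi i))) / n%:R.

(* Running time of Near-Linear(k): number of evaluations of d,
   one for each pair (i, j) in S^k_n x S^k_m. *)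
Definition near_linear_time (n m k : nat) : nat := (cardS n k * cardS m k)%N.

(* Main.v *)
Require Import Defs.
From mathcomp Require Import all_boot all_order all_algebra.
From mathcomp Require Import zify ring lra.
Import Order.TTheory GRing.Theory Num.Theory.


Lemma count_mult k N : (0 < k)%N -> count (fun i => k %| i) (iota 1 N) = N %/ k.
Proof.
move=> k0; elim: N => [|N IH]; first by rewrite div0n.
by rewrite -[N.+1]addn1 iotaD count_cat IH /= addn1 divnS // addn0 addnC.
Qed.

Lemma count_or3 (T : Type) (a b c e : pred T) s :
  (forall x, a x -> [|| b x, c x | e x]) ->
  (count a s <= count b s + count c s + count e s)%N.
Proof.
move=> H; elim: s => [|x s IH] //=.
have := H x; case: (a x); case: (b x); case: (c x); case: (e x) => //= Hx;
  try (have := Hx isT => //); lia.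
Qed.

Lemma cardS_bound N k : (1 <= k)%N -> (k <= N)%N -> (cardS N k * k <= 3 * N)%N.
Proof.
move=> k1 kN.
have H : (cardS N k <= N %/ k + 1 + 1)%N.
  rewrite /cardS -(@count_mult k N k1).
  apply: (leq_trans (@count_or3 nat (inS N k) (fun i => k %| i) (fun i => i == 1%N) (fun i => i == N) (iota 1 N) _)).
    by move=> x /andP[_ /orP[->|/orP[->|->]]]; rewrite ?orbT.
  apply: leq_add; first apply: leq_add => //.
    by have := count_uniq_mem 1%N (iota_uniq 1 N); rewrite /= => ->; rewrite leq_b1.
  by have := count_uniq_mem N (iota_uniq 1 N); rewrite /= => ->; rewrite leq_b1.
have := leq_trunc_div N k.
have := leq_mul H (leqnn k). lia.
Qed.

Lemma time_bound n m k : (1 <= k)%N -> (k <= minn n m)%N ->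
  (near_linear_time n m k * k ^ 2 <= 9 * (n * m))%N.
Proof.
move=> k1 kmin.
have kn : (k <= n)%N by move: kmin; rewrite leq_min => /andP[].
have km : (k <= m)%N by move: kmin; rewrite leq_min => /andP[].
rewrite /near_linear_time expnS expn1 mulnACA.
have := leq_mul (@cardS_bound n k k1 kn) (@cardS_bound m k k1 km). lia.
Qed.

Lemma coverS N k j : (1 <= k)%N -> (1 <= j <= N)%N ->
  exists t, inS N k t /\ (distn t j < k)%N.
Proof.
move=> k1 /andP[j1 jN].
case: (posnP (j %/ k)) => [q0|qp].
  exists 1%N; split; first by rewrite /inS eqxx orbT andbT; lia.
  have := divn_eq j k. rewrite q0 mul0n add0n => e.
  have := ltn_pmod j k1. rewrite /distn. lia.
exists (j %/ k * k)%N; split.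
  rewrite /inS dvdn_mull // andbT. have := leq_trunc_div j k.
  have : (1 * k <= j %/ k * k)%N by rewrite leq_mul2r qp orbT. lia.
have := divn_eq j k. have := ltn_pmod j k1. rewrite /distn. lia.
Qed.

Local Open Scope ring_scope.

Lemma chain (R : realFieldType) (T : Type) (d : T -> T -> R) (g : nat -> T) N delta :
  is_distance d ->
  (forall i, (1 <= i < N)%N -> d (g i) (g i.+1) <= delta) ->
  forall a c, (1 <= a)%N -> (1 <= c)%N -> (a <= N)%N -> (c <= N)%N -> a <> c ->
  d (g a) (g c) <= (distn a c)%:R * delta.
Proof.
move=> [d0 [ds dt]] Hg.
have key : forall e a, (1 <= a)%N -> (a + e.+1 <= N)%N ->
    d (g a) (g (a + e.+1)%N) <= (e.+1)%:R * delta.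
  elim=> [|e IH] a a1 aN.
    rewrite addn1 mul1r; apply: Hg; lia.
  apply: le_trans (dt _ (g (a + e.+1)%N) _) _.
  have h1 := IH a a1 ltac:(lia).
  have h2 : d (g (a + e.+1)%N) (g (a + e.+2)%N) <= delta.
    by rewrite !addnS; apply: Hg; lia.
  rewrite [(e.+2)%:R]mulrSr mulrDl mul1r. exact: lerD h1 h2.
move=> a c a1 c1 aN cN ac.
case: (ltngtP a c) => h; last by [].
- rewrite -[in g c](subnKC (ltnW h)) -[in distn a c](subnKC (ltnW h)).
  have -> : (c - a = (c - a).-1.+1)%N by lia.
  have -> : distn a (a + (c - a).-1.+1) = (c - a).-1.+1 by rewrite /distn; lia.
  apply: key => //; lia.
- rewrite ds -[in g a](subnKC (ltnW h)) -[in distn a c](subnKC (ltnW h)).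
  have -> : (a - c = (a - c).-1.+1)%N by lia.
  have -> : distn (c + (a - c).-1.+1) c = (a - c).-1.+1 by rewrite /distn; lia.
  apply: key; lia.
Qed.

Lemma distnC a b : distn a b = distn b a.
Proof. by rewrite /distn addnC. Qed.

Theorem corollary3p3 :
  exists c : nat,
  forall (R : realFieldType) (T : Type) (d : T -> T -> R)
         (n m k : nat) (f b : nat -> T) (delta eps : R),
    is_distance d ->
    0 < delta ->
    (forall i, (1 <= i < n)%N -> d (f i) (f i.+1) <= delta) ->
    (forall j, (1 <= j < m)%N -> d (b j) (b j.+1) <= delta) ->
    (forall i, (1 <= i <= n)%N ->
       exists j, (1 <= j <= m)%N /\ d (f i) (b j) <= eps) ->
    eps = k%:R * delta ->
    (1 <= k)%N -> (k <= minn n m)%N ->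
    (forall pi, near_linear_output d n m k f b pi ->
       cost d n f b pi <= c%:R * eps)
    /\ (near_linear_time n m k * k ^ 2 <= c * (n * m))%N.
Proof.
exists 9%N => R T d n m k f b delta eps dist dpos Hf Hb Hcov epsE k1 kmin.
split; last exact: time_bound.
move=> pi [HS HN].
have kn : (k <= n)%N by move: kmin; rewrite leq_min => /andP[].
have km : (k <= m)%N by move: kmin; rewrite leq_min => /andP[].
have n1 : (1 <= n)%N by apply: leq_trans kn.
have [d0 [ds dt]] := dist.
have eps0 : 0 <= eps by rewrite epsE mulr_ge0 // ltW.
have kd : forall x, (x <= k)%N -> x%:R * delta <= eps.
  by move=> x xk; rewrite epsE; apply: ler_wpM2r; [exact: ltW | rewrite ler_nat].
have H1 : forall i, inS n k i -> d (f i) (b (pi i)) <= eps + eps.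
  move=> i iS; have [_ Hmin] := HS i iS.
  have i1n : (1 <= i <= n)%N by move/andP: iS => [].
  have [j [j1m Hj]] := Hcov i i1n.
  case jS: (inS m k j).
    by apply: le_trans (Hmin j jS) _; lra.
  have [t [tS tj]] := @coverS m k j k1 j1m.
  apply: le_trans (Hmin t tS) _; apply: le_trans (dt _ (b j) _) _.
  have tj' : j <> t by move=> e; rewrite e tS in jS.
  move/andP: tS => [/andP[t1 tm] _]; move/andP: j1m => [j1 jm].
  have := @chain R T d b m delta dist Hb j t j1 t1 jm tm tj'.
  rewrite distnC => h.
  have := kd _ (ltnW tj). lra.
have H2 : forall i, (1 <= i <= n)%N -> d (f i) (b (pi i)) <= eps + eps + eps.
  move=> i i1n; case iS: (inS n k i).
    have := H1 i iS; lra.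
  have [t [tS tnear ->]] := HN i i1n (negbT iS).
  have [t' [t'S t'i]] := @coverS n k i k1 i1n.
  have ti : (distn t i < k)%N := leq_ltn_trans (tnear t' t'S) t'i.
  have it : i <> t by move=> e; rewrite e tS in iS.
  have h1 := H1 t tS.
  move/andP: (tS) => [/andP[t1 tn] _]; move/andP: i1n => [i1 iN].
  have := @chain R T d f n delta dist Hf i t i1 t1 iN tn it.
  rewrite distnC => h.
  have := kd _ (ltnW ti).
  have := dt (f i) (f t) (b (pi t)). lra.
rewrite /cost ler_pdivrMr ?ltr0n //.
apply: le_trans (ler_sum_nat (G := fun _ => eps + eps + eps) _) _.
  by move=> i /andP[i1 iN]; apply: H2; rewrite i1 -ltnS iN.
rewrite sumr_const_nat subn1 /= -mulr_natr.
have : 0 <= (n%:R : R) by rewrite ler0n.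
nra.
Qed.
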